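(* Let $k$ be a positive integer and let $P=v_1v_2\cdots v_l$ be a path with $l\ge 2k$. Then $P$ has a dispersed $k$-placement $(\phi_1,\dots,\phi_k)$ in $K_l$ such that, for all indices $a,b$ with $|a-b|\ge 2k-1$, the $2k$ vertices $\phi_i(v_a),\phi_j(v_b)$ ($1\le i,j\le k$) are pairwise distinct.
   Context: For a graph $H$ on $m$ vertices, a $k$-placement of $H$ (in $K_m$) is a $k$-tuple $(\phi_1,\dots,\phi_k)$ of bijections $\phi_i:V(H)\to V(K_m)$ such that the edge sets $\phi_i(E(H))=\{\phi_i(x)\phi_i(y):xy\in E(H)\}$ are pairwise disjoint. A vertex $v$ is $k$-placed if $\phi_i(v)\ne\phi_j(v)$ for all $i\neq j$; the placement is dispersed if every vertex is $k$-placed. *)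

(* Defs.v *)
From mathcomp Require Import all_boot fingroup perm.
Set Implicit Arguments. Unset Strict Implicit. Unset Printing Implicit Defensive.

(* The path P = v_1 ... v_l is modelled on vertex set 'I_l, with v_{a+1}
   represented by the ordinal a (0-based); edges are {a, a+1}. *)
Definition path_edge (l : nat) (x y : 'I_l) : bool :=
  (val y == (val x).+1) || (val x == (val y).+1).

Definition edge_disjoint (l : nat) (phi psi : {perm 'I_l}) : Prop :=
  forall x y x' y' : 'I_l, path_edge x y -> path_edge x' y' ->
    ~ ((phi x == psi x') && (phi y == psi y')).

Definition placement (k l : nat) (phi : 'I_k -> {perm 'I_l}) : Prop :=
  forall i j : 'I_k, i != j -> edge_disjoint (phi i) (phi j).

Definition dispersed (k l : nat) (phi : 'I_k -> {perm 'I_l}) : Prop :=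
  forall (v : 'I_l) (i j : 'I_k), i != j -> phi i v != phi j v.

(* Main.v *)
Require Import Defs.
From mathcomp Require Import all_boot fingroup perm.
From mathcomp Require Import zify.
Set Implicit Arguments. Unset Strict Implicit. Unset Printing Implicit Defensive.

Definition F (l t : nat) (p : bool) (x : nat) : nat :=
  if odd x == p then (if x + t < l then x + t else 2*l - 1 - t - x)
  else (if t <= x then x - t else t - 1 - x).

Ltac par x := let Ox := fresh "O" in let H := fresh "H" in
  have H := odd_double_half x; case Ox: (odd x) H => /= H; rewrite -?muln2 in H.

Ltac par2 x := let Ox := fresh "O" in let H := fresh "H" in let q := fresh "q" in
  have H := odd_double_half x; case Ox: (odd x) H => /= H; rewrite -?muln2 in H;
  move: (x./2) H => q H; subst x; clear Ox.

Ltac crunch := repeat (case: ifP => ?); lia.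

Lemma F_lt l t p x : x < l -> t < l -> F l t p x < l.
Proof. rewrite /F => *; case: (odd x == p); crunch. Qed.

Lemma F_inj l t p x y u : t = u.*2.+1 -> t < l -> x < l -> y < l -> F l t p x = F l t p y -> x = y.
Proof.
move=> -> tl xl yl; rewrite /F; par x; par y; case: p => /=; rewrite -?muln2; crunch.
Qed.

Lemma F_disp l t p x : x < l -> t < l -> F l t p x <= x + t /\ x <= F l t p x + t.
Proof. rewrite /F => *; case: (odd x == p); crunch. Qed.

Lemma F_disj l t p t' p' x u u' : t = u.*2.+1 -> t' = u'.*2.+1 -> t + t' + 2 <= l ->
  (t != t') || (p != p') -> x < l -> F l t p x <> F l t' p' x.
Proof.
move=> -> -> hl hn xl; rewrite /F; par x; case: p hn; case: p' => /= hn;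
 rewrite -?muln2 in hn *; crunch.
Qed.

Lemma F_edge1 l t p t' p' x y u u' : t = u.*2.+1 -> t' = u'.*2.+1 -> t + t' + 2 <= l ->
  (t != t') || (p != p') -> x.+1 < l -> y.+1 < l ->
  F l t p x = F l t' p' y -> F l t p x.+1 = F l t' p' y.+1 -> False.
Proof.
move=> -> -> hl hn xl yl; rewrite /F /=; par2 x; par2 y; case: p hn; case: p' => /= hn;
 rewrite -?muln2 in hn *; repeat (case: ifP => ?); lia.
Qed.
Lemma F_edge2 l t p t' p' x y u u' : t = u.*2.+1 -> t' = u'.*2.+1 -> t + t' + 2 <= l ->
  (t != t') || (p != p') -> x.+1 < l -> y.+1 < l ->
  F l t p x = F l t' p' y.+1 -> F l t p x.+1 = F l t' p' y -> False.
Proof.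
move=> -> -> hl hn xl yl; rewrite /F /=; par2 x; par2 y; case: p hn; case: p' => /= hn;
 rewrite -?muln2 in hn *; repeat (case: ifP => ?); lia.
Qed.

Definition tt_ (i : nat) := (i./2).*2.+1.

Lemma tt_lt k l (i : 'I_k) : 2 * k <= l -> tt_ i < l.
Proof. move=> h; rewrite /tt_ -muln2; have := odd_double_half i; rewrite -muln2; have := ltn_ord i; lia. Qed.

Lemma tt_pair k l (i j : 'I_k) : 2 * k <= l -> i != j ->
  [/\ tt_ i + tt_ j + 2 <= l, tt_ i + tt_ j < 2 * k - 1 & (tt_ i != tt_ j) || (odd i != odd j)].
Proof.
move=> h /eqP nij.
have Hi := odd_double_half i; have Hj := odd_double_half j.
have ik := ltn_ord i; have jk := ltn_ord j.
have nij' : (i : nat) <> j by move=> e; apply: nij; apply: val_inj.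
rewrite /tt_ -!muln2 in Hi Hj *.
case: (odd i) Hi; case: (odd j) Hj => /= Hj Hi; split; lia.
Qed.

Section Build.
Variables (k l : nat) (hk : 0 < k) (hl : 2 * k <= l).

Definition fmap (i : 'I_k) (x : 'I_l) : 'I_l := insubd x (F l (tt_ i) (odd i) x).

Lemma fmapE i x : val (fmap i x) = F l (tt_ i) (odd i) x.
Proof. by rewrite /fmap val_insubd F_lt // tt_lt. Qed.

Lemma fmap_inj i : injective (fmap i).
Proof.
move=> x y /(congr1 val); rewrite !fmapE => e; apply: val_inj.
exact: (F_inj (u := i./2) erefl (tt_lt i hl) (ltn_ord x) (ltn_ord y) e).
Qed.

Definition phi (i : 'I_k) : {perm 'I_l} := perm (@fmap_inj i).

Lemma phiE i x : val (phi i x) = F l (tt_ i) (odd i) x.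
Proof. by rewrite permE fmapE. Qed.
End Build.

Theorem mainTheorem5 (k l : nat) (hk : 0 < k) (hl : 2 * k <= l) :
  exists phi : 'I_k -> {perm 'I_l},
    [/\ placement phi, dispersed phi &
      forall a b : 'I_l,
        (2 * k - 1 <= val a - val b) \/ (2 * k - 1 <= val b - val a) ->
        (* the 2k vertices phi_i(v_a), phi_j(v_b) are pairwise distinct *)
        injective (fun p : 'I_k * bool =>
                     if p.2 then phi p.1 a else phi p.1 b)].
Proof.
exists (phi hl); split.
- move=> i j nij x y x' y' exy ex'y'; case/andP=> /eqP e1 /eqP e2.
  have [h1 _ h3] := tt_pair hl nij.
  move: e1 e2 => /(congr1 val) e1 /(congr1 val) e2; rewrite !phiE in e1 e2.
  have Ex := ltn_ord x; have Ey := ltn_ord y; have Ex' := ltn_ord x'; have Ey' := ltn_ord y'.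
  case/orP: exy => /eqP exy; case/orP: ex'y' => /eqP ex'y'; rewrite ?exy ?ex'y' in e1 e2 Ex Ey Ex' Ey'.
  + exact: (F_edge1 erefl erefl h1 h3 Ey Ey' e1 e2).
  + exact: (F_edge2 erefl erefl h1 h3 Ey Ex' e1 e2).
  + exact: (F_edge2 erefl erefl h1 h3 Ex Ey' e2 e1).
  + exact: (F_edge1 erefl erefl h1 h3 Ex Ex' e2 e1).
- move=> v i j nij; apply/eqP => /(congr1 val); rewrite !phiE.
  have [h1 _ h3] := tt_pair hl nij.
  exact: (F_disj erefl erefl h1 h3 (ltn_ord v)).
- move=> a b hab0 [i c] [j d] /=.
  have hab : 2*k-1 <= (a : nat) - b \/ 2*k-1 <= (b : nat) - a := hab0; clear hab0.
  have dispi := F_disp (odd i) (ltn_ord a) (tt_lt i hl).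
  have dispi' := F_disp (odd i) (ltn_ord b) (tt_lt i hl).
  have dispj := F_disp (odd j) (ltn_ord a) (tt_lt j hl).
  have dispj' := F_disp (odd j) (ltn_ord b) (tt_lt j hl).
  have ab : a != b by apply/eqP => e; rewrite e subnn in hab; lia.
  case: (eqVneq i j) => [<-|nij].
    case: c; case: d => // /(perm_inj) e; [by rewrite e eqxx in ab | by rewrite e eqxx in ab].
  have [h1 h2 h3] := tt_pair hl nij.
  case: c; case: d => /(congr1 val); rewrite !phiE => e; exfalso; try lia.
  all: first [exact: (F_disj erefl erefl h1 h3 (ltn_ord a) e)
             | exact: (F_disj erefl erefl h1 h3 (ltn_ord b) e)].
Qed.
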